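(* Let $T\ge2$, let $n\ge2T^2$ be an integer, and $N=\frac{\sqrt{2n+1}+\sqrt{2n+3}}{2}$. Then for all $x,y\in[-T,T]$, $$k_n(x,y)=\frac1\pi\frac{\sin N(x-y)}{x-y}+R_n(x,y)\qquad\text{with}\qquad |R_n(x,y)|\le\frac{17T^2}{\sqrt{2n+1}},$$ where for $x=y$ the first term is interpreted as $N/\pi$.
   Context: For an integer $n\ge0$, $H_n(x)=(-1)^n e^{x^2}\frac{d^n}{dx^n}e^{-x^2}$ is the $n$-th Hermite polynomial and $h_n(x)=\frac{1}{\pi^{1/4}\sqrt{2^n n!}}H_n(x)e^{-x^2/2}$ is the $n$-th Hermite function; $(h_n)_{n\ge0}$ is an orthonormal basis of $L^2(\mathbb R)$. The kernel $k_n(x,y)=\sum_{k=0}^n h_k(x)h_k(y)$ is the kernel of the orthogonal projection of $L^2(\mathbb R)$ onto $\mathrm{span}(h_0,\dots,h_n)$. *)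

(* Defs.v *)
From Stdlib Require Import Reals Lra Lia Arith Factorial ClassicalEpsilon.
Open Scope R_scope.

(* The derivative of f at x: the (unique) l with derivable_pt_lim f x l,
   chosen by Hilbert's epsilon (an arbitrary value if f is not differentiable at x;
   irrelevant here since all functions involved are smooth). *)
Definition deriv (f : R -> R) (x : R) : R :=
  epsilon (inhabits 0) (fun l => derivable_pt_lim f x l).

Fixpoint nth_deriv (n : nat) (f : R -> R) : R -> R :=
  match n with
  | O => f
  | S m => deriv (nth_deriv m f)
  end.

Definition hermite_poly (n : nat) (x : R) : R :=
  (-1) ^ n * exp (x ^ 2) * nth_deriv n (fun t => exp (- t ^ 2)) x.

Definition hermite_fun (n : nat) (x : R) : R :=
  / (Rpower PI (1/4) * sqrt (2 ^ n * INR (fact n))) * hermite_poly n x * exp (- x ^ 2 / 2).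

Definition kernel_k (n : nat) (x y : R) : R :=
  sum_f_R0 (fun k => hermite_fun k x * hermite_fun k y) n.

Definition sinc_term (N x y : R) : R :=
  if Req_EM_T x y then N / PI else / PI * (sin (N * (x - y)) / (x - y)).

(* Main.v *)
Require Import Defs.
From Stdlib Require Import Reals Lra Lia Psatz Arith Factorial ClassicalEpsilon FunctionalExtensionality.
From Coquelicot Require Import Coquelicot.
Open Scope R_scope.

Lemma dpl_mult f g x a b l : derivable_pt_lim f x a -> derivable_pt_lim g x b ->
  l = a * g x + f x * b -> derivable_pt_lim (fun t => f t * g t) x l.
Proof. intros Ha Hb ->. exact (derivable_pt_lim_mult f g x a b Ha Hb). Qed.
Lemma dpl_plus f g x a b l : derivable_pt_lim f x a -> derivable_pt_lim g x b ->
  l = a + b -> derivable_pt_lim (fun t => f t + g t) x l.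
Proof. intros Ha Hb ->. exact (derivable_pt_lim_plus f g x a b Ha Hb). Qed.
Lemma dpl_minus f g x a b l : derivable_pt_lim f x a -> derivable_pt_lim g x b ->
  l = a - b -> derivable_pt_lim (fun t => f t - g t) x l.
Proof. intros Ha Hb ->. exact (derivable_pt_lim_minus f g x a b Ha Hb). Qed.
Lemma dpl_const c x l : l = 0 -> derivable_pt_lim (fun _ => c) x l.
Proof. intros ->. apply derivable_pt_lim_const. Qed.
Lemma dpl_id x l : l = 1 -> derivable_pt_lim (fun t => t) x l.
Proof. intros ->. apply derivable_pt_lim_id. Qed.
Lemma dpl_exp f x a l : derivable_pt_lim f x a -> l = a * exp (f x) ->
  derivable_pt_lim (fun t => exp (f t)) x l.
Proof. intros Ha ->. rewrite Rmult_comm.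
  apply (derivable_pt_lim_comp f exp x a (exp (f x)) Ha (derivable_pt_lim_exp (f x))). Qed.
Lemma dpl_sin f x a l : derivable_pt_lim f x a -> l = a * cos (f x) ->
  derivable_pt_lim (fun t => sin (f t)) x l.
Proof. intros Ha ->. rewrite Rmult_comm.
  apply (derivable_pt_lim_comp f sin x a (cos (f x)) Ha (derivable_pt_lim_sin (f x))). Qed.
Lemma dpl_cos f x a l : derivable_pt_lim f x a -> l = - a * sin (f x) ->
  derivable_pt_lim (fun t => cos (f t)) x l.
Proof. intros Ha ->. replace (- a * sin (f x)) with (- sin (f x) * a) by ring.
  apply (derivable_pt_lim_comp f cos x a (- sin (f x)) Ha (derivable_pt_lim_cos (f x))). Qed.
Lemma dpl_ext f g x l : (forall t, f t = g t) -> derivable_pt_lim f x l -> derivable_pt_lim g x l.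
Proof. intros E H. replace g with f; auto. apply functional_extensionality; auto. Qed.

Lemma deriv_eq f x l : derivable_pt_lim f x l -> deriv f x = l.
Proof.
  intros H. unfold deriv.
  pose proof (epsilon_spec (inhabits 0) (fun l => derivable_pt_lim f x l) (ex_intro _ l H)) as E.
  eapply uniqueness_limite; eauto.
Qed.

Fixpoint Hp (n : nat) (x : R) : R :=
  match n with
  | O => 1
  | S m => match m with
           | O => 2 * x
           | S k => 2 * x * Hp m x - 2 * INR m * Hp k x
           end
  end.

Definition dHp (n : nat) (x : R) : R :=
  match n with O => 0 | S k => 2 * INR (S k) * Hp k x end.

Lemma Hp_SS k x : Hp (S (S k)) x = 2 * x * Hp (S k) x - 2 * INR (S k) * Hp k x.
Proof. reflexivity. Qed.

Lemma Hp_Q n x : Hp (S n) x = 2 * x * Hp n x - dHp n x.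
Proof. destruct n. simpl. ring. rewrite Hp_SS. unfold dHp. ring. Qed.

Lemma Hp_deriv n x : derivable_pt_lim (Hp n) x (dHp n x).
Proof.
  assert (forall n, derivable_pt_lim (Hp n) x (dHp n x) /\ derivable_pt_lim (Hp (S n)) x (dHp (S n) x)).
  { induction n0.
    - split. change (derivable_pt_lim (fun _ => 1) x (dHp 0 x)). apply dpl_const. reflexivity.
      change (derivable_pt_lim (fun t => 2 * t) x (dHp 1 x)).
      apply (dpl_mult (fun _ => 2) (fun t => t) x 0 1). apply dpl_const; auto. apply dpl_id; auto.
      simpl. ring.
    - destruct IHn0 as [H0 H1]. split; auto.
      change (derivable_pt_lim (fun t => 2 * t * Hp (S n0) t - 2 * INR (S n0) * Hp n0 t) x (dHp (S (S n0)) x)).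
      eapply dpl_minus.
      + eapply dpl_mult. eapply dpl_mult. apply dpl_const; reflexivity. apply dpl_id; reflexivity.
        reflexivity. exact H1. reflexivity.
      + eapply dpl_mult. apply dpl_const; reflexivity. exact H0. reflexivity.
      + change (dHp (S (S n0)) x) with (2 * INR (S (S n0)) * Hp (S n0) x).
        change (dHp (S n0) x) with (2 * INR (S n0) * Hp n0 x).
        rewrite (Hp_Q n0 x). rewrite !S_INR. ring. }
  apply H.
Qed.

Lemma gauss_deriv x : derivable_pt_lim (fun t => exp (- t ^ 2)) x (-2 * x * exp (- x ^ 2)).
Proof.
  eapply dpl_exp. eapply (derivable_pt_lim_opp (fun t => t ^ 2)). apply derivable_pt_lim_pow.
  simpl. ring.
Qed.

Lemma nth_deriv_gauss n : nth_deriv n (fun t => exp (- t ^ 2)) = fun x => (-1) ^ n * Hp n x * exp (- x ^ 2).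
Proof.
  induction n.
  - simpl. apply functional_extensionality. intros. ring.
  - change (deriv (nth_deriv n (fun t => exp (- t ^ 2))) = fun x => (-1) ^ S n * Hp (S n) x * exp (- x ^ 2)). rewrite IHn. apply functional_extensionality. intros x.
    apply deriv_eq. eapply dpl_mult. eapply dpl_mult. apply dpl_const; reflexivity.
    apply Hp_deriv. reflexivity. apply gauss_deriv.
    rewrite Hp_Q. simpl pow. ring.
Qed.

Lemma hermite_poly_eq n x : hermite_poly n x = Hp n x.
Proof.
  unfold hermite_poly. rewrite nth_deriv_gauss.
  assert (E1 : (-1) ^ n * (-1) ^ n = 1).
  { rewrite <- Rpow_mult_distr. replace (-1 * -1) with 1 by ring. apply pow1. }
  assert (E2 : exp (x ^ 2) * exp (- x ^ 2) = 1).
  { rewrite <- exp_plus. rewrite Rplus_opp_r. apply exp_0. }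
  transitivity (((-1) ^ n * (-1) ^ n) * (exp (x ^ 2) * exp (- x ^ 2)) * Hp n x). ring.
  rewrite E1, E2. ring.
Qed.

Definition A4 := Rpower PI (1/4).
Definition C (n : nat) := / (A4 * sqrt (2 ^ n * INR (fact n))).
Definition b (n : nat) := sqrt (2 * INR (S n)).

Lemma A4_pos : 0 < A4.
Proof. unfold A4, Rpower. apply exp_pos. Qed.

Lemma fact_pos_R n : 0 < 2 ^ n * INR (fact n).
Proof. apply Rmult_lt_0_compat. apply pow_lt; lra. apply lt_0_INR. apply lt_O_fact. Qed.

Lemma b_pos n : 0 < b n.
Proof. unfold b. apply sqrt_lt_R0. rewrite S_INR. pose proof (pos_INR n). lra. Qed.

Lemma bb n : b n * b n = 2 * INR (S n).
Proof. unfold b. apply sqrt_sqrt. rewrite S_INR. pose proof (pos_INR n). lra. Qed.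

Lemma C_rec n : C n = b n * C (S n).
Proof.
  unfold C, b.
  assert (E : 2 ^ S n * INR (fact (S n)) = (2 ^ n * INR (fact n)) * (2 * INR (S n))).
  { simpl pow. rewrite fact_simpl, mult_INR. ring. }
  rewrite E. rewrite (sqrt_mult (2 ^ n * INR (fact n)) (2 * INR (S n))).
  2: left; apply fact_pos_R.
  2: rewrite S_INR; pose proof (pos_INR n); lra.
  pose proof A4_pos. pose proof (sqrt_lt_R0 _ (fact_pos_R n)).
  assert (0 < sqrt (2 * INR (S n))). { apply sqrt_lt_R0. rewrite S_INR; pose proof (pos_INR n); lra. }
  field. split; lra.
Qed.

Definition hf := hermite_fun.

Lemma hf_eq n x : hf n x = C n * Hp n x * exp (- x ^ 2 / 2).
Proof. unfold hf, hermite_fun. rewrite hermite_poly_eq. reflexivity. Qed.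

Lemma hf_rec n x : b (S n) * hf (S (S n)) x = 2 * x * hf (S n) x - b n * hf n x.
Proof.
  rewrite !hf_eq. rewrite (C_rec n), (C_rec (S n)), Hp_SS.
  transitivity (b (S n) * C (S (S n)) * (2 * x * Hp (S n) x - (b n * b n) * Hp n x) * exp (- x ^ 2 / 2)).
  rewrite bb. ring. ring.
Qed.

Lemma hf_1 x : b 0 * hf 1 x = 2 * x * hf 0 x.
Proof. rewrite !hf_eq. rewrite (C_rec 0). simpl Hp. ring. Qed.

Lemma hf_deriv n x : derivable_pt_lim (hf n) x (x * hf n x - b n * hf (S n) x).
Proof.
  apply (dpl_ext (fun t => C n * Hp n t * exp (- t ^ 2 / 2))).
  { intros; rewrite hf_eq; auto. }
  eapply dpl_mult. eapply dpl_mult. apply dpl_const; reflexivity. apply Hp_deriv. reflexivity.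
  eapply dpl_exp. eapply (dpl_mult (fun t => - t ^ 2) (fun _ => / 2)).
  eapply (derivable_pt_lim_opp (fun t => t ^ 2)). apply derivable_pt_lim_pow.
  apply dpl_const; reflexivity. reflexivity. reflexivity.
  rewrite !hf_eq. rewrite (C_rec n). rewrite (Hp_Q n x). simpl. field.
Qed.

Lemma hf0_0 : hf 0 0 * hf 0 0 = / sqrt PI.
Proof.
  rewrite hf_eq. unfold C. simpl Hp. simpl pow. simpl fact. simpl INR.
  replace (- (0 * (0 * 1)) / 2) with 0 by field. rewrite exp_0.
  replace (1 * 1) with 1 by ring. rewrite sqrt_1, Rmult_1_r, !Rmult_1_r.
  rewrite <- Rinv_mult. f_equal. unfold A4. rewrite <- Rpower_plus.
  replace (1/4 + 1/4) with (/2) by field. apply Rpower_sqrt. apply PI_RGT_0.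
Qed.

Lemma hf_odd0 m : hf (S (2 * m)) 0 = 0.
Proof.
  induction m.
  - pose proof (hf_1 0). simpl in *. pose proof (b_pos 0).
    replace (2 * 0 * hf 0 0) with 0 in H by ring.
    apply Rmult_integral in H. destruct H; auto. lra.
  - replace (S (2 * S m)) with (S (S (S (2 * m)))) by lia.
    pose proof (hf_rec (S (2 * m)) 0). rewrite IHm in H.
    pose proof (b_pos (S (S (2 * m)))).
    replace (2 * 0 * hf (S (S (2 * m))) 0 - b (S (2 * m)) * 0) with 0 in H by ring.
    apply Rmult_integral in H. destruct H; auto. lra.
Qed.

Fixpoint cw (m : nat) : R :=
  match m with O => 1 | S k => cw k * (2 * INR k + 1) / (2 * INR k + 2) end.

Lemma hf_even0 m : hf (2 * m) 0 * hf (2 * m) 0 = cw m / sqrt PI.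
Proof.
  induction m.
  - simpl. rewrite hf0_0. field. apply Rgt_not_eq. apply sqrt_lt_R0, PI_RGT_0.
  - replace (2 * S m)%nat with (S (S (2 * m))) by lia.
    pose proof (hf_rec (2 * m) 0).
    replace (2 * 0 * hf (S (2 * m)) 0) with 0 in H by ring.
    assert (E : (b (S (2 * m)) * b (S (2*m))) * (hf (S (S (2 * m))) 0 * hf (S (S (2 * m))) 0) = (b (2 * m) * b (2*m)) * (hf (2 * m) 0 * hf (2 * m) 0)).
    { transitivity ((b (S (2 * m)) * hf (S (S (2 * m))) 0) * (b (S (2 * m)) * hf (S (S (2 * m))) 0)). ring.
      rewrite H. ring. }
    rewrite !bb, IHm in E. simpl cw.
    rewrite !S_INR, mult_INR in E. simpl INR in E.
    assert (0 < sqrt PI) by (apply sqrt_lt_R0, PI_RGT_0).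
    pose proof (pos_INR m).
    replace (1 + 1) with 2 in E by ring.
    apply (Rmult_eq_reg_l (2 * (2 * INR m + 1 + 1))). 2: lra.
    rewrite E. field. lra.
Qed.

Lemma CD n x y : 2 * (x - y) * kernel_k n x y = b n * (hf (S n) x * hf n y - hf n x * hf (S n) y).
Proof.
  induction n.
  - unfold kernel_k. simpl sum_f_R0. fold hf.
    transitivity ((b 0 * hf 1 x) * hf 0 y - hf 0 x * (b 0 * hf 1 y)). 2: ring.
    rewrite !hf_1. ring.
  - unfold kernel_k in *. simpl sum_f_R0. fold hf in *.
    transitivity (2 * (x - y) * sum_f_R0 (fun k : nat => hf k x * hf k y) n + 2 * (x - y) * (hf (S n) x * hf (S n) y)). ring.
    rewrite IHn.
    transitivity ((b (S n) * hf (S (S n)) x) * hf (S n) y - hf (S n) x * (b (S n) * hf (S (S n)) y)). 2: ring.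
    rewrite !hf_rec. ring.
Qed.

Lemma CDD n x : 2 * kernel_k n x x = b n * b n * (hf n x * hf n x + hf (S n) x * hf (S n) x) - 2 * b n * x * hf n x * hf (S n) x.
Proof.
  induction n.
  - unfold kernel_k. simpl sum_f_R0. fold hf.
    transitivity (b 0 * b 0 * (hf 0 x * hf 0 x) + (b 0 * hf 1 x) * (b 0 * hf 1 x) - 2 * x * hf 0 x * (b 0 * hf 1 x)). 2: ring.
    rewrite hf_1, bb. simpl INR. ring.
  - unfold kernel_k in *. simpl sum_f_R0. fold hf in *.
    transitivity (2 * sum_f_R0 (fun k : nat => hf k x * hf k x) n + 2 * (hf (S n) x * hf (S n) x)). ring.
    rewrite IHn.
    transitivity (b (S n) * b (S n) * (hf (S n) x * hf (S n) x) + (b (S n) * hf (S (S n)) x) * (b (S n) * hf (S (S n)) x) - 2 * x * hf (S n) x * (b (S n) * hf (S (S n)) x)). 2: ring.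
    rewrite hf_rec.
    transitivity (b (S n) * b (S n) * (hf (S n) x * hf (S n) x) + (b n * b n) * (hf n x * hf n x) - 2 * b n * x * hf n x * hf (S n) x). 2: ring.
    rewrite !bb. rewrite !S_INR. ring.
Qed.

Lemma nonincr f f' a b : a <= b -> (forall c, a <= c <= b -> derivable_pt_lim f c (f' c)) ->
  (forall c, a <= c <= b -> f' c <= 0) -> f b <= f a.
Proof.
  intros Hab Hd Hn. destruct (Req_dec a b) as [->|Hne]. lra.
  destruct (MVT_cor2 f f' a b) as [c [E Hc]]. lra. auto.
  assert (f' c * (b - a) <= 0). { assert (f' c <= 0) by (apply Hn; lra). nra. }
  lra.
Qed.

Lemma mvt_abs f f' a b Mb : (forall c, Rmin a b <= c <= Rmax a b -> derivable_pt_lim f c (f' c)) ->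
  (forall c, Rmin a b <= c <= Rmax a b -> Rabs (f' c) <= Mb) -> Rabs (f b - f a) <= Mb * Rabs (b - a).
Proof.
  intros Hd Hb. destruct (Rtotal_order a b) as [Hlt|[Heq|Hgt]].
  - destruct (MVT_cor2 f f' a b Hlt) as [c [E Hc]].
    { intros c Hc. apply Hd. rewrite Rmin_left, Rmax_right; lra. }
    rewrite E, Rabs_mult. apply Rmult_le_compat_r. apply Rabs_pos. apply Hb.
    rewrite Rmin_left, Rmax_right; lra.
  - subst. replace (f b - f b) with 0 by ring. replace (b - b) with 0 by ring. rewrite Rabs_R0.
    assert (0 <= Mb). { eapply Rle_trans. apply Rabs_pos. apply (Hb b). split. apply Rmin_l. apply Rmax_l. }
    lra.
  - destruct (MVT_cor2 f f' b a Hgt) as [c [E Hc]].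
    { intros c Hc. apply Hd. rewrite Rmin_right, Rmax_left; lra. }
    replace (f b - f a) with (- (f a - f b)) by ring. rewrite Rabs_Ropp.
    replace (b - a) with (- (a - b)) by ring. rewrite Rabs_Ropp.
    rewrite E, Rabs_mult. apply Rmult_le_compat_r. apply Rabs_pos. apply Hb.
    rewrite Rmin_right, Rmax_left; lra.
Qed.

Lemma sin_lip a c : Rabs (sin a - sin c) <= Rabs (a - c).
Proof.
  replace (Rabs (a - c)) with (1 * Rabs (a - c)) by ring.
  apply (mvt_abs sin cos c a 1).
  - intros; apply derivable_pt_lim_sin.
  - intros. apply Rabs_le. apply COS_bound.
Qed.

Lemma sin_abs_le a : Rabs (sin a) <= Rabs a.
Proof. pose proof (sin_lip a 0). rewrite sin_0 in H. rewrite !Rminus_0_r in H. exact H. Qed.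

Lemma abs_le_inv x y : Rabs x <= y -> -y <= x <= y.
Proof. unfold Rabs; destruct (Rcase_abs x); lra. Qed.

Lemma exp_mono x y : x <= y -> exp x <= exp y.
Proof. intros H. destruct (Req_dec x y). subst; lra. left; apply exp_increasing; lra. Qed.

Lemma gronwall P P' k T z : 0 < k -> -T <= z <= T ->
  (forall c, -T <= c <= T -> derivable_pt_lim P c (P' c)) ->
  (forall c, -T <= c <= T -> Rabs (P' c) <= k * P c) ->
  P z <= P 0 * exp (k * T) /\ P 0 * exp (- (k * T)) <= P z.
Proof.
  intros Hk Hz Hd Hb.
  assert (Hpos : forall c, -T <= c <= T -> 0 <= P c).
  { intros c Hc. pose proof (Hb c Hc). pose proof (Rabs_pos (P' c)). nra. }
  assert (H0 : -T <= 0 <= T) by lra.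
  pose proof (Hpos 0 H0) as P0p. pose proof (Hpos z Hz) as Pzp.
  assert (D1 : forall c, -T <= c <= T -> derivable_pt_lim (fun t => P t * exp (- (k * t))) c ((P' c - k * P c) * exp (- (k * c)))).
  { intros c Hc. eapply dpl_mult. apply Hd; auto. eapply dpl_exp.
    eapply (derivable_pt_lim_opp (fun t => k * t)). eapply (dpl_mult (fun _ => k) (fun t => t)).
    apply dpl_const; reflexivity. apply dpl_id; reflexivity. reflexivity. reflexivity. ring. }
  assert (D2 : forall c, -T <= c <= T -> derivable_pt_lim (fun t => - (P t * exp (k * t))) c (- ((P' c + k * P c) * exp (k * c)))).
  { intros c Hc. apply (derivable_pt_lim_opp (fun t => P t * exp (k * t))). eapply dpl_mult. apply Hd; auto. eapply dpl_exp.
    eapply (dpl_mult (fun _ => k) (fun t => t)).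
    apply dpl_const; reflexivity. apply dpl_id; reflexivity. reflexivity. reflexivity. ring. }
  assert (S1 : forall c, -T <= c <= T -> (P' c - k * P c) * exp (- (k * c)) <= 0).
  { intros c Hc. pose proof (Hb c Hc). apply abs_le_inv in H. pose proof (exp_pos (- (k * c))). nra. }
  assert (S2 : forall c, -T <= c <= T -> - ((P' c + k * P c) * exp (k * c)) <= 0).
  { intros c Hc. pose proof (Hb c Hc). apply abs_le_inv in H. pose proof (exp_pos (k * c)). nra. }
  assert (Ez : exp (- (k * z)) * exp (k * z) = 1). { rewrite <- exp_plus. replace (- (k * z) + k * z) with 0 by ring. apply exp_0. }
  pose proof (exp_pos (k * z)). pose proof (exp_pos (- (k * z))).
  assert (R1 : exp (k * z) <= exp (k * T)) by (apply exp_mono; nra).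
  assert (R2 : exp (- (k * z)) <= exp (k * T)) by (apply exp_mono; nra).
  assert (R3 : exp (- (k * T)) <= exp (k * z)) by (apply exp_mono; nra).
  assert (R4 : exp (- (k * T)) <= exp (- (k * z))) by (apply exp_mono; nra).
  destruct (Rle_dec 0 z).
  - assert (A1 := nonincr _ _ 0 z r (fun c Hc => D1 c ltac:(lra)) (fun c Hc => S1 c ltac:(lra))).
    assert (A2 := nonincr _ _ 0 z r (fun c Hc => D2 c ltac:(lra)) (fun c Hc => S2 c ltac:(lra))).
    simpl in A1, A2. rewrite Rmult_0_r, Ropp_0, exp_0 in A1. rewrite Rmult_0_r, exp_0 in A2.
    split; nra.
  - assert (A1 := nonincr _ _ z 0 ltac:(lra) (fun c Hc => D1 c ltac:(lra)) (fun c Hc => S1 c ltac:(lra))).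
    assert (A2 := nonincr _ _ z 0 ltac:(lra) (fun c Hc => D2 c ltac:(lra)) (fun c Hc => S2 c ltac:(lra))).
    simpl in A1, A2. rewrite Rmult_0_r, Ropp_0, exp_0 in A1. rewrite Rmult_0_r, exp_0 in A2.
    split; nra.
Qed.

Definition Lr n := 2 * INR n + 1.
Definition u1 n x := x * hf n x - b n * hf (S n) x.

Lemma Lr_pos n : 0 < Lr n.
Proof. unfold Lr. pose proof (pos_INR n). lra. Qed.

Lemma du n x : derivable_pt_lim (hf n) x (u1 n x).
Proof. apply hf_deriv. Qed.

Lemma du1 n x : derivable_pt_lim (u1 n) x ((x ^ 2 - Lr n) * hf n x).
Proof.
  unfold u1 at 1.
  eapply dpl_minus. eapply dpl_mult. apply dpl_id; reflexivity. apply du. reflexivity.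
  eapply (dpl_mult (fun _ => b n) (hf (S n))). apply dpl_const; reflexivity. apply hf_deriv. reflexivity.
  symmetry.
  transitivity (1 * hf n x + x * u1 n x - (0 * hf (S n) x + b n * (x * hf (S n) x - (b (S n) * hf (S (S n)) x)))). ring.
  rewrite hf_rec. unfold u1, Lr.
  transitivity (hf n x + x * (x * hf n x - b n * hf (S n) x) - b n * (x * hf (S n) x) + 2 * x * b n * hf (S n) x - (b n * b n) * hf n x). ring.
  rewrite bb. rewrite S_INR. ring.
Qed.

Lemma k_off n x y : x <> y -> kernel_k n x y = hf n x * hf n y / 2 + (hf n x * u1 n y - u1 n x * hf n y) / (2 * (x - y)).
Proof.
  intros Hxy. pose proof (CD n x y) as E.
  assert (E2 : 2 * (x - y) * kernel_k n x y = (x - y) * hf n x * hf n y + (hf n x * u1 n y - u1 n x * hf n y)).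
  { rewrite E. unfold u1. ring. }
  assert (x - y <> 0) by lra.
  apply (Rmult_eq_reg_l (2 * (x - y))). rewrite E2. field. auto. apply Rmult_integral_contrapositive; split; lra.
Qed.

Lemma k_diag n x : kernel_k n x x = (1 - x ^ 2) * hf n x ^ 2 / 2 + Lr n * (hf n x ^ 2 + u1 n x ^ 2 / Lr n) / 2.
Proof.
  pose proof (CDD n x) as E. pose proof (Lr_pos n).
  assert (E2 : 2 * kernel_k n x x = (Lr n + 1 - x ^ 2) * hf n x ^ 2 + u1 n x ^ 2).
  { rewrite E. unfold u1.
    transitivity ((b n * b n) * hf n x ^ 2 + (x * hf n x - b n * hf (S n) x) ^ 2 - x ^ 2 * hf n x ^ 2). 2: { rewrite bb. unfold Lr. rewrite S_INR. ring. }
    ring. }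
  apply (Rmult_eq_reg_l 2). rewrite E2. field. lra. lra.
Qed.

Lemma dpl_sq f x a l : derivable_pt_lim f x a -> l = 2 * f x * a -> derivable_pt_lim (fun t => f t ^ 2) x l.
Proof.
  intros H ->. apply (dpl_ext (fun t => f t * f t)). intros; ring.
  eapply dpl_mult; eauto. ring.
Qed.

Lemma dpl_div f g x a c l : derivable_pt_lim f x a -> derivable_pt_lim g x c -> g x <> 0 ->
  l = (a * g x - c * f x) / (g x) ^ 2 -> derivable_pt_lim (fun t => f t / g t) x l.
Proof.
  intros Ha Hc Hg ->. replace ((g x) ^ 2) with (Rsqr (g x)) by (unfold Rsqr; ring).
  exact (derivable_pt_lim_div f g x a c Ha Hc Hg).
Qed.

Definition Pf n z := hf n z ^ 2 + u1 n z ^ 2 / (Lr n - z ^ 2).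
Definition Mf n z := hf n z ^ 2 + u1 n z ^ 2 / Lr n.

Lemma Pder n z : z ^ 2 < Lr n -> derivable_pt_lim (Pf n) z (2 * z * u1 n z ^ 2 / (Lr n - z ^ 2) ^ 2).
Proof.
  intros Hz. unfold Pf.
  eapply dpl_plus. eapply dpl_sq. apply du. reflexivity.
  eapply dpl_div. eapply dpl_sq. apply du1. reflexivity.
  eapply dpl_minus. apply dpl_const; reflexivity. eapply dpl_sq. apply dpl_id; reflexivity. reflexivity. reflexivity.
  lra. reflexivity. field. lra.
Qed.

Definition V1 n lam z := cos (lam * z) * hf n z - sin (lam * z) * u1 n z / lam.
Definition V2 n lam z := sin (lam * z) * hf n z + cos (lam * z) * u1 n z / lam.

Lemma dlin lam z : derivable_pt_lim (fun t => lam * t) z lam.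
Proof. eapply (dpl_mult (fun _ => lam) (fun t => t)). apply dpl_const; reflexivity. apply dpl_id; reflexivity. ring. Qed.

Lemma dV1 n lam z : lam * lam = Lr n -> lam <> 0 ->
  derivable_pt_lim (V1 n lam) z (- (z ^ 2 / lam) * sin (lam * z) * hf n z).
Proof.
  intros HL Hl. unfold V1.
  eapply dpl_minus. eapply dpl_mult. eapply dpl_cos. apply dlin. reflexivity. apply du. reflexivity.
  eapply (dpl_div (fun t => sin (lam * t) * u1 n t) (fun _ => lam)). eapply dpl_mult. eapply dpl_sin. apply dlin. reflexivity.
  apply du1. reflexivity. apply dpl_const; reflexivity. auto. reflexivity.
  rewrite <- HL. field. auto.
Qed.

Lemma dV2 n lam z : lam * lam = Lr n -> lam <> 0 ->
  derivable_pt_lim (V2 n lam) z ((z ^ 2 / lam) * cos (lam * z) * hf n z).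
Proof.
  intros HL Hl. unfold V2.
  eapply dpl_plus. eapply dpl_mult. eapply dpl_sin. apply dlin. reflexivity. apply du. reflexivity.
  eapply (dpl_div (fun t => cos (lam * t) * u1 n t) (fun _ => lam)). eapply dpl_mult. eapply dpl_cos. apply dlin. reflexivity.
  apply du1. reflexivity. apply dpl_const; reflexivity. auto. reflexivity.
  rewrite <- HL. field. auto.
Qed.

Definition Iw (k : nat) : R := RInt (fun x => sin x ^ k) 0 (PI / 2).

Lemma exI k : ex_RInt (fun x => sin x ^ k) 0 (PI / 2).
Proof. apply (@ex_RInt_continuous R_CompleteNormedModule). intros z _. apply (ex_derive_continuous (K:=R_AbsRing) (V:=R_NormedModule)). auto_derive. auto. Qed.

Lemma Iw0 : Iw 0 = PI / 2.
Proof. unfold Iw. simpl. rewrite RInt_const. unfold scal; simpl. unfold mult; simpl. ring. Qed.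

Lemma Iw1 : Iw 1 = 1.
Proof.
  unfold Iw. apply is_RInt_unique.
  replace 1 with (minus ((fun x => - cos x) (PI / 2)) ((fun x => - cos x) 0)).
  2: { simpl. rewrite cos_PI2, cos_0. unfold minus, plus, opp; simpl. ring. }
  apply (is_RInt_derive (V:=R_CompleteNormedModule) (fun x => - cos x)).
  - intros x _. auto_derive. auto. ring.
  - intros x _. apply (ex_derive_continuous (K:=R_AbsRing) (V:=R_NormedModule)). auto_derive. auto.
Qed.

Lemma Iw_rec k : INR (S (S k)) * Iw (S (S k)) = INR (S k) * Iw k.
Proof.
  assert (H : is_RInt (fun x => INR (S k) * sin x ^ k - INR (S (S k)) * sin x ^ (S (S k))) 0 (PI / 2)
     (minus ((fun x => sin x ^ (S k) * cos x) (PI / 2)) ((fun x => sin x ^ (S k) * cos x) 0))).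
  { apply (is_RInt_derive (V:=R_CompleteNormedModule) (fun x => sin x ^ (S k) * cos x)).
    - intros x _. auto_derive. auto.
      change (match k with 0%nat => 1 | S _ => INR k + 1 end) with (INR (S k)).
      pose proof (sin2 x) as Hs. unfold Rsqr in Hs.
      assert (Hc : cos x * cos x = 1 - sin x * sin x) by lra.
      rewrite !S_INR. simpl pow.
      transitivity ((INR k + 1) * sin x ^ k * (cos x * cos x) - sin x * sin x * sin x ^ k). ring.
      rewrite Hc. ring.
    - intros x _. apply (ex_derive_continuous (K:=R_AbsRing) (V:=R_NormedModule)). auto_derive. auto. }
  assert (H2 : is_RInt (fun x => INR (S k) * sin x ^ k - INR (S (S k)) * sin x ^ (S (S k))) 0 (PI / 2)
                 (INR (S k) * Iw k - INR (S (S k)) * Iw (S (S k)))).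
  { apply (is_RInt_minus (fun x => INR (S k) * sin x ^ k) (fun x => INR (S (S k)) * sin x ^ (S (S k)))).
    apply (is_RInt_scal (fun x => sin x ^ k)). unfold Iw; apply (RInt_correct (V:=R_CompleteNormedModule)); apply exI.
    apply (is_RInt_scal (fun x => sin x ^ (S (S k)))). unfold Iw; apply (RInt_correct (V:=R_CompleteNormedModule)); apply exI. }
  pose proof (is_RInt_unique _ _ _ _ H) as U1.
  pose proof (is_RInt_unique _ _ _ _ H2) as U2.
  rewrite U1 in U2. assert (Z : INR (S k) * Iw k - INR (S (S k)) * Iw (S (S k)) = 0). { rewrite <- U2. rewrite cos_PI2, sin_0. unfold minus, plus, opp. simpl. ring. } lra.
Qed.

Lemma Iw_mono k : Iw (S k) <= Iw k.
Proof.
  unfold Iw. apply RInt_le. pose proof PI_RGT_0; lra. apply exI. apply exI.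
  intros x Hx. simpl.
  assert (0 <= sin x <= 1). { split. apply sin_ge_0; pose proof PI_RGT_0; lra. apply SIN_bound. }
  assert (0 <= sin x ^ k) by (apply pow_le; lra).
  nra.
Qed.

Lemma cw_pos m : 0 < cw m.
Proof. induction m; simpl. lra. pose proof (pos_INR m). apply Rdiv_lt_0_compat; nra. Qed.

Lemma Iw_even m : Iw (2 * m) = cw m * (PI / 2).
Proof.
  induction m. simpl. rewrite Iw0. ring.
  replace (2 * S m)%nat with (S (S (2 * m))) by lia.
  pose proof (Iw_rec (2 * m)). rewrite IHm in H. simpl cw.
  rewrite !S_INR, mult_INR in H. simpl INR in H. pose proof (pos_INR m).
  apply (Rmult_eq_reg_l ((1+1) * INR m + 1 + 1)). 2: lra.
  rewrite H. field. lra.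
Qed.

Lemma Iw_odd m : Iw (S (2 * m)) * (2 * INR m + 1) * cw m = 1.
Proof.
  induction m. simpl. rewrite Iw1. ring.
  replace (S (2 * S m)) with (S (S (S (2 * m)))) by lia.
  pose proof (Iw_rec (S (2 * m))). simpl cw.
  rewrite !S_INR, mult_INR in H. simpl INR in H. pose proof (pos_INR m).
  rewrite S_INR.
  replace (Iw (S (S (S (2 * m)))) * (2 * (INR m + 1) + 1) * (cw m * (2 * INR m + 1) / (2 * INR m + 2)))
    with (((1 + 1) * INR m + 1 + 1 + 1) * Iw (S (S (S (2 * m)))) * (cw m * (2 * INR m + 1) / (2 * INR m + 2))) by (field; lra).
  rewrite H. transitivity (Iw (S (2 * m)) * (2 * INR m + 1) * cw m). field. lra. exact IHm.
Qed.

Lemma inv_of a c : a * c = 1 -> c <> 0 -> a = / c.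
Proof. intros H Hc. apply (Rmult_eq_reg_r c); auto. rewrite H, Rinv_l; auto. Qed.

Lemma wallis_lo m : 2 / (PI * (2 * INR m + 1)) <= cw m * cw m.
Proof.
  pose proof (Iw_mono (2 * m)). rewrite Iw_even in H.
  pose proof (Iw_odd m). pose proof (cw_pos m). pose proof PI_RGT_0. pose proof (pos_INR m).
  assert (Iw (S (2 * m)) = / ((2 * INR m + 1) * cw m)). { apply inv_of. rewrite <- Rmult_assoc; exact H0. apply Rgt_not_eq. nra. }
  rewrite H4 in H.
  apply (Rmult_le_reg_r ((2 * INR m + 1) * cw m)). nra.
  apply (Rmult_le_reg_l (/ cw m)). apply Rinv_0_lt_compat; lra.
  replace (/ cw m * (2 / (PI * (2 * INR m + 1)) * ((2 * INR m + 1) * cw m))) with (2 / PI) by (field; split; lra).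
  apply (Rmult_le_reg_l (PI / 2)). lra.
  replace (PI / 2 * (2 / PI)) with 1 by (field; lra).
  replace (PI / 2 * (/ cw m * (cw m * cw m * ((2 * INR m + 1) * cw m)))) with ((cw m * (PI / 2)) * ((2 * INR m + 1) * cw m)) by (field; lra).
  replace 1 with (/ ((2 * INR m + 1) * cw m) * ((2 * INR m + 1) * cw m)) at 1 by (field; split; lra).
  apply Rmult_le_compat_r. nra. lra.
Qed.

Lemma wallis_hi m : PI * INR (S m) * (cw (S m) * cw (S m)) <= 1.
Proof.
  pose proof (Iw_mono (S (2 * m))). replace (S (S (2 * m))) with (2 * S m)%nat in H by lia.
  rewrite Iw_even in H.
  pose proof (Iw_odd m). pose proof (cw_pos m). pose proof PI_RGT_0. pose proof (pos_INR m).
  assert (E : cw (S m) = cw m * (2 * INR m + 1) / (2 * INR m + 2)) by reflexivity.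
  assert (Iw (S (2 * m)) = / ((2 * INR m + 1) * cw m)). { apply inv_of. rewrite <- Rmult_assoc; exact H0. apply Rgt_not_eq. nra. }
  rewrite H4 in H. rewrite E in *. rewrite S_INR.
  apply (Rmult_le_compat_r ((2 * INR m + 1) * cw m * 2 / PI)) in H. 2: { apply Rmult_le_pos. 2: left; apply Rinv_0_lt_compat; lra. nra. }
  replace (/ ((2 * INR m + 1) * cw m) * ((2 * INR m + 1) * cw m * 2 / PI)) with (2 / PI) in H by (field; split; lra).
  apply (Rmult_le_reg_r (2 / PI)). apply Rdiv_lt_0_compat; lra.
  eapply Rle_trans. 2: { rewrite Rmult_1_l. exact H. }
  right. field. split; lra.
Qed.

Lemma arith_even m X : 1 <= m -> X * m <= 1 -> 2 <= X * (2 * m + 1) -> Rabs ((4 * m + 1) * X / 4 - 1) <= 2 / (4 * m + 1).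
Proof.
  intros Hm H1 H2. apply Rabs_le.
  assert (0 < X) by nra.
  split.
  - apply (Rmult_le_reg_r (4 * (4 * m + 1))). lra.
    replace (- (2 / (4 * m + 1)) * (4 * (4 * m + 1))) with (-8) by (field; lra).
    nra.
  - apply (Rmult_le_reg_r (4 * (4 * m + 1))). lra.
    replace (2 / (4 * m + 1) * (4 * (4 * m + 1))) with 8 by (field; lra).
    nra.
Qed.

Lemma arith_odd p X : 1 <= p -> X * p <= 1 -> 2 <= X * (2 * p + 1) -> Rabs (4 * p * p * X / (4 * p - 1) - 1) <= 2 / (4 * p - 1).
Proof.
  intros Hm H1 H2. apply Rabs_le.
  assert (0 < X) by nra.
  split.
  - apply (Rmult_le_reg_r (4 * p - 1)). lra.
    replace (- (2 / (4 * p - 1)) * (4 * p - 1)) with (-2) by (field; lra).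
    replace ((4 * p * p * X / (4 * p - 1) - 1) * (4 * p - 1)) with (4 * p * p * X - (4 * p - 1)) by (field; lra).
    nra.
  - apply (Rmult_le_reg_r (4 * p - 1)). lra.
    replace (2 / (4 * p - 1) * (4 * p - 1)) with 2 by (field; lra).
    replace ((4 * p * p * X / (4 * p - 1) - 1) * (4 * p - 1)) with (4 * p * p * X - (4 * p - 1)) by (field; lra).
    nra.
Qed.

Lemma center n lam : (2 <= n)%nat -> lam * lam = Lr n -> 0 < lam ->
  Rabs ((PI * lam * Pf n 0 / 2) ^ 2 - 1) <= 2 / Lr n.
Proof.
  intros Hn HL Hl.
  pose proof PI_RGT_0 as Hpi.
  assert (Hs : sqrt PI * sqrt PI = PI) by (apply sqrt_sqrt; lra).
  assert (Hsp : 0 < sqrt PI) by (apply sqrt_lt_R0; lra).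
  destruct (Nat.Even_or_Odd n) as [[m Hm]|[m Hm]].
  -
    subst n. destruct m as [|j]. lia.
    assert (U : u1 (2 * S j) 0 = 0).
    { unfold u1. replace (S (2 * S j)) with (S (2 * (S j)))%nat by lia. rewrite hf_odd0. ring. }
    assert (P0 : Pf (2 * S j) 0 = cw (S j) / sqrt PI).
    { unfold Pf. rewrite U. rewrite <- hf_even0. pose proof (Lr_pos (2 * S j)). field. lra. }
    rewrite P0.
    assert (E : (PI * lam * (cw (S j) / sqrt PI) / 2) ^ 2 = (4 * INR (S j) + 1) * (PI * (cw (S j) * cw (S j))) / 4).
    { transitivity (PI * PI * (lam * lam) * (cw (S j) * cw (S j)) / (sqrt PI * sqrt PI) / 4). field. lra.
      rewrite Hs, HL. unfold Lr. rewrite mult_INR. simpl (INR 2). field. lra. }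
    rewrite E. unfold Lr. rewrite mult_INR. simpl (INR 2).
    replace (2 * ((1 + 1) * INR (S j)) + 1) with (4 * INR (S j) + 1) by ring.
    apply arith_even.
    + rewrite S_INR. pose proof (pos_INR j). lra.
    + pose proof (wallis_hi j). nra.
    + pose proof (wallis_lo (S j)). apply (Rmult_le_compat_r (PI * (2 * INR (S j) + 1))) in H.
      replace (2 / (PI * (2 * INR (S j) + 1)) * (PI * (2 * INR (S j) + 1))) with 2 in H.
      nra. field. rewrite S_INR. pose proof (pos_INR j). split; lra.
      rewrite S_INR. pose proof (pos_INR j). nra.
  -
    subst n. replace (2 * m + 1)%nat with (S (2 * m)) by lia.
    assert (U : hf (S (2 * m)) 0 = 0) by apply hf_odd0.
    assert (Hb := bb (S (2 * m))).
    assert (P0 : Pf (S (2 * m)) 0 = (2 * INR (S (S (2 * m)))) * (cw (S m) / sqrt PI) / Lr (S (2 * m))).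
    { unfold Pf. rewrite U. rewrite <- Hb. replace (S (S (2 * m))) with (2 * S m)%nat by lia.
      rewrite <- hf_even0. unfold u1. rewrite U. replace (2 * S m)%nat with (S (S (2 * m))) by lia.
      pose proof (Lr_pos (S (2 * m))). field. lra. }
    rewrite P0.
    assert (E : (PI * lam * (2 * INR (S (S (2 * m))) * (cw (S m) / sqrt PI) / Lr (S (2 * m))) / 2) ^ 2
               = 4 * INR (S m) * INR (S m) * (PI * (cw (S m) * cw (S m))) / (4 * INR (S m) - 1)).
    { pose proof (Lr_pos (S (2 * m))).
      transitivity (PI * PI * (lam * lam) * (INR (S (S (2 * m))) * INR (S (S (2 * m)))) * (cw (S m) * cw (S m)) / (sqrt PI * sqrt PI) / (Lr (S (2 * m)) * Lr (S (2 * m)))). field. lra.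
      rewrite Hs, HL. unfold Lr. rewrite !S_INR, mult_INR. simpl (INR 2). pose proof (pos_INR m). replace (INR (2 * m + 1)) with (2 * INR m + 1) by (rewrite plus_INR, mult_INR; simpl; ring). field. lra. }
    rewrite E. unfold Lr.
    replace (2 * INR (S (2 * m)) + 1) with (4 * INR (S m) - 1) by (rewrite !S_INR, mult_INR; simpl; ring).
    apply arith_odd.
    + rewrite S_INR. pose proof (pos_INR m). lra.
    + pose proof (wallis_hi m). nra.
    + pose proof (wallis_lo (S m)). apply (Rmult_le_compat_r (PI * (2 * INR (S m) + 1))) in H.
      replace (2 / (PI * (2 * INR (S m) + 1)) * (PI * (2 * INR (S m) + 1))) with 2 in H.
      nra. field. rewrite S_INR. pose proof (pos_INR m). split; lra.
      rewrite S_INR. pose proof (pos_INR m). nra.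
Qed.


Lemma abs_sq_le q : 0 <= q -> Rabs (q - 1) <= Rabs (q ^ 2 - 1).
Proof.
  intros Hq. replace (q ^ 2 - 1) with ((q - 1) * (q + 1)) by ring.
  rewrite Rabs_mult. rewrite (Rabs_right (q + 1)) by lra.
  pose proof (Rabs_pos (q - 1)). nra.
Qed.

Lemma key_bound T L lam P0 Pz Mz :
  2 <= T -> 4 * T ^ 2 <= L - 1 -> lam * lam = L -> 0 < lam -> 0 <= P0 ->
  Rabs ((PI * lam * P0 / 2) ^ 2 - 1) <= 2 / L ->
  Pz <= P0 * exp (2 * T / (L - T ^ 2) * T) -> P0 * exp (- (2 * T / (L - T ^ 2) * T)) <= Pz ->
  (L - T ^ 2) / L * Pz <= Mz -> Mz <= Pz ->
  Rabs (lam * Mz / 2 - / PI) <= 4 * T ^ 2 / L /\ P0 * exp (2 * T / (L - T ^ 2) * T) <= 3 / lam.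
Proof.
  intros HT HL Hlam Hl HP0 Hc Hu Hlo HMlo HMhi.
  pose proof PI2_3_2 as Hpi.
  assert (HLp : 0 < L) by nra.
  set (a := 2 * T / (L - T ^ 2) * T) in *.
  set (e := T ^ 2 / L).
  assert (He : T ^ 2 = e * L) by (unfold e; field; lra).
  assert (He4 : 4 / L <= e) by (unfold e; apply Rmult_le_compat_r; [left; apply Rinv_0_lt_compat; lra | nra]).
  assert (He1 : e <= 1 / 4) by (unfold e; apply (Rmult_le_reg_r L); [lra|]; field_simplify; nra; lra).
  assert (Ha : a * (L - T ^ 2) = 2 * T ^ 2) by (unfold a; field; nra).
  assert (Ha0 : 0 <= a) by (unfold a; apply Rmult_le_pos; [apply Rmult_le_pos; [lra| left; apply Rinv_0_lt_compat; nra] | lra]).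
  assert (Ha1 : a * (1 - e) = 2 * e).
  { apply (Rmult_eq_reg_r L). 2: lra. replace (a * (1 - e) * L) with (a * (L - e * L)) by ring. rewrite <- He, Ha, He. ring. }
  assert (Ha2 : a <= 8 * e / 3) by nra.
  assert (Ha3 : a <= 2 / 3) by nra.
  assert (Em : 1 - a <= exp (- a)). { pose proof (exp_ineq1_le (- a)). lra. }
  assert (Ep : exp a * exp (- a) = 1). { rewrite <- exp_plus. replace (a + - a) with 0 by ring. apply exp_0. }
  assert (Ep1 : exp a * (1 - a) <= 1). { pose proof (exp_pos a). nra. }
  assert (Ep0 : 1 <= exp a). { pose proof (exp_ineq1_le a). lra. }
  set (q := PI * lam * P0 / 2) in *.
  assert (Hq0 : 0 <= q) by (unfold q; apply Rmult_le_pos; [apply Rmult_le_pos; [apply Rmult_le_pos|]|]; lra).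
  pose proof (abs_sq_le q Hq0) as Hq1.
  assert (Hq : Rabs (q - 1) <= e / 2).
  { eapply Rle_trans. apply Hq1. eapply Rle_trans. apply Hc. unfold Rdiv. nra. }
  apply abs_le_inv in Hq.
  set (s := PI * lam / 2).
  assert (Hs : 0 < s) by (unfold s; nra).
  assert (Hqs : q = s * P0) by (unfold q, s; field).
  set (w := s * Mz).
  assert (HPz0 : 0 <= Pz). { pose proof (exp_pos (- a)). nra. }
  assert (W1 : w <= q * exp a). { unfold w. rewrite Hqs. assert (Mz <= P0 * exp a) by lra. nra. }
  assert (W2 : (1 - e) * (1 - a) * q <= w).
  { unfold w. rewrite Hqs.
    assert (E1 : (L - T ^ 2) / L = 1 - e) by (unfold e; field; lra).
    rewrite E1 in HMlo.
    assert (P0 * (1 - a) <= Pz) by nra.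
    assert ((1 - e) * (P0 * (1 - a)) <= (1 - e) * Pz) by (apply Rmult_le_compat_l; lra).
    nra. }
  assert (Wu : w - 1 <= 12 * e).
  { assert (q * exp a <= (1 + e / 2) * exp a) by (apply Rmult_le_compat_r; [left; apply exp_pos|lra]).
    assert (exp a <= 3) by nra.
    assert (exp a - 1 <= 8 * e) by nra.
    nra. }
  assert (Wl : 1 - w <= 12 * e).
  { assert ((1 - e) * (1 - a) * (1 - e / 2) <= (1 - e) * (1 - a) * q).
    { apply Rmult_le_compat_l. apply Rmult_le_pos; lra. lra. }
    nra. }
  split.
  - replace (lam * Mz / 2 - / PI) with ((w - 1) / PI) by (unfold w, s; field; lra).
    unfold Rdiv. rewrite Rabs_mult. rewrite (Rabs_right (/ PI)) by (left; apply Rinv_0_lt_compat; lra).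
    replace (4 * T ^ 2 * / L) with (4 * e) by (unfold e; field; lra).
    assert (Rabs (w - 1) <= 12 * e) by (apply Rabs_le; lra).
    apply (Rmult_le_reg_r PI). lra. rewrite Rmult_assoc, Rinv_l by lra. nra.
  - assert (P0 = q / s) by (rewrite Hqs; field; lra).
    rewrite H. unfold s.
    assert (exp a <= 3) by nra.
    apply (Rmult_le_reg_r (PI * lam)). nra.
    replace (q / (PI * lam / 2) * exp a * (PI * lam)) with (2 * q * exp a) by (field; lra).
    replace (3 / lam * (PI * lam)) with (3 * PI) by (field; lra).
    assert (q * exp a <= (1 + e / 2) * 3) by (apply Rmult_le_compat; try lra; left; apply exp_pos).
    nra.
Qed.

Lemma prod_le hx hy Pm : hx ^ 2 <= Pm -> hy ^ 2 <= Pm -> Rabs (hx * hy) <= Pm.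
Proof.
  intros H1 H2. rewrite Rabs_mult.
  assert (Rabs hx * Rabs hx = hx ^ 2) by (rewrite <- Rabs_mult; simpl; rewrite Rmult_1_r; apply Rabs_right; nra).
  assert (Rabs hy * Rabs hy = hy ^ 2) by (rewrite <- Rabs_mult; simpl; rewrite Rmult_1_r; apply Rabs_right; nra).
  pose proof (Rabs_pos hx). pose proof (Rabs_pos hy). nra.
Qed.

Lemma final_off T L lam N Pm hx hy My E d :
  2 <= T -> lam * lam = L -> 0 < lam -> d <> 0 ->
  hx ^ 2 <= Pm -> hy ^ 2 <= Pm -> Pm <= 3 / lam ->
  Rabs E <= 2 * (T ^ 2 / lam) * Pm * Rabs d ->
  Rabs (lam * My / 2 - / PI) <= 4 * T ^ 2 / L ->
  0 <= N - lam <= 1 / (2 * lam) ->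
  Rabs (hx * hy / 2 + (lam * (My * sin (lam * d) + E)) / (2 * d) - / PI * (sin (N * d) / d)) <= 17 * T ^ 2 / lam.
Proof.
  intros HT HL Hl Hd H1 H2 HPm HE HM HN.
  pose proof PI2_3_2 as Hpi.
  assert (Had : 0 < Rabs d) by (apply Rabs_pos_lt; auto).
  replace (hx * hy / 2 + (lam * (My * sin (lam * d) + E)) / (2 * d) - / PI * (sin (N * d) / d))
    with (hx * hy / 2 + lam * E / (2 * d) + (lam * My / 2 - / PI) * (sin (lam * d) / d) + / PI * ((sin (lam * d) - sin (N * d)) / d))
    by (field; split; lra).
  assert (A : Rabs (hx * hy / 2) <= Pm / 2).
  { unfold Rdiv. rewrite Rabs_mult. rewrite (Rabs_right (/ 2)) by lra. pose proof (prod_le _ _ _ H1 H2). lra. }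
  assert (B : Rabs (lam * E / (2 * d)) <= T ^ 2 * Pm).
  { unfold Rdiv. rewrite !Rabs_mult. rewrite Rabs_Rinv by (apply Rmult_integral_contrapositive; split; lra).
    rewrite Rabs_mult. rewrite (Rabs_right lam) by lra. rewrite (Rabs_right 2) by lra.
    apply (Rmult_le_reg_r (2 * Rabs d)). lra.
    replace (lam * Rabs E * / (2 * Rabs d) * (2 * Rabs d)) with (lam * Rabs E) by (field; lra).
    replace (T ^ 2 * Pm * (2 * Rabs d)) with (lam * (2 * (T ^ 2 / lam) * Pm * Rabs d)) by (field; lra).
    apply Rmult_le_compat_l; lra. }
  assert (Cc : Rabs ((lam * My / 2 - / PI) * (sin (lam * d) / d)) <= 4 * T ^ 2 / lam).
  { rewrite Rabs_mult.
    assert (S1 : Rabs (sin (lam * d) / d) <= lam).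
    { unfold Rdiv. rewrite Rabs_mult, Rabs_Rinv by lra. pose proof (sin_abs_le (lam * d)).
      rewrite Rabs_mult, (Rabs_right lam) in H by lra.
      apply (Rmult_le_reg_r (Rabs d)). lra. rewrite Rmult_assoc, Rinv_l by lra. lra. }
    replace (4 * T ^ 2 / lam) with (4 * T ^ 2 / L * lam) by (rewrite <- HL; field; lra).
    apply Rmult_le_compat; auto; apply Rabs_pos. }
  assert (D : Rabs (/ PI * ((sin (lam * d) - sin (N * d)) / d)) <= 1 / (6 * lam)).
  { rewrite Rabs_mult. rewrite (Rabs_right (/ PI)) by (left; apply Rinv_0_lt_compat; lra).
    assert (S1 : Rabs ((sin (lam * d) - sin (N * d)) / d) <= 1 / (2 * lam)).
    { unfold Rdiv at 1. rewrite Rabs_mult, Rabs_Rinv by lra. pose proof (sin_lip (lam * d) (N * d)).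
      replace (lam * d - N * d) with ((lam - N) * d) in H by ring. rewrite Rabs_mult in H.
      rewrite (Rabs_left1 (lam - N)) in H by lra.
      apply (Rmult_le_reg_r (Rabs d)). lra. rewrite Rmult_assoc, Rinv_l by lra. nra. }
    assert (/ PI <= 1 / 3). { assert (/ PI <= / 3) by (apply Rinv_le_contravar; lra). lra. }
    assert (0 <= 1 / (2 * lam)). { apply Rlt_le, Rdiv_lt_0_compat; lra. }
    replace (1 / (6 * lam)) with (1 / 3 * (1 / (2 * lam))) by (field; lra).
    apply Rmult_le_compat; auto. left; apply Rinv_0_lt_compat; lra. apply Rabs_pos. }
  eapply Rle_trans. apply Rabs_triang. eapply Rle_trans. apply Rplus_le_compat_r. apply Rabs_triang.
  eapply Rle_trans. apply Rplus_le_compat_r. apply Rplus_le_compat_r. apply Rabs_triang.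
  assert (Pm <= 3 * (T ^ 2 / 4) / lam).
  { eapply Rle_trans. apply HPm. unfold Rdiv. apply Rmult_le_compat_r. left; apply Rinv_0_lt_compat; lra. nra. }
  assert (T ^ 2 * Pm <= 3 * T ^ 2 / lam).
  { replace (3 * T ^ 2 / lam) with (T ^ 2 * (3 / lam)) by (field; lra). apply Rmult_le_compat_l. nra. auto. }
  assert (1 / (6 * lam) <= (T ^ 2 / 24) / lam).
  { unfold Rdiv. rewrite Rinv_mult. rewrite <- Rmult_assoc. apply Rmult_le_compat_r. left; apply Rinv_0_lt_compat; lra. nra. }
  assert (17 * T ^ 2 / lam = (3 * (T ^ 2 / 4) / 2 + 3 * T ^ 2 + 4 * T ^ 2 + T ^ 2 / 24 + (17 - 3/8 - 7 - 1/24) * T ^ 2) / lam) by (field; lra).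
  assert (0 <= (17 - 3/8 - 7 - 1/24) * T ^ 2 / lam). { apply Rmult_le_pos. nra. left; apply Rinv_0_lt_compat; lra. }
  unfold Rdiv in *. nra.
Qed.

Lemma final_diag T L lam N Pm hx x Mx :
  2 <= T -> lam * lam = L -> 0 < lam -> x ^ 2 <= T ^ 2 ->
  hx ^ 2 <= Pm -> Pm <= 3 / lam ->
  Rabs (lam * Mx / 2 - / PI) <= 4 * T ^ 2 / L ->
  0 <= N - lam <= 1 / (2 * lam) ->
  Rabs ((1 - x ^ 2) * hx ^ 2 / 2 + L * Mx / 2 - N / PI) <= 17 * T ^ 2 / lam.
Proof.
  intros HT HL Hl Hx H1 HPm HM HN.
  pose proof PI2_3_2 as Hpi.
  replace ((1 - x ^ 2) * hx ^ 2 / 2 + L * Mx / 2 - N / PI)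
    with ((1 - x ^ 2) * hx ^ 2 / 2 + lam * (lam * Mx / 2 - / PI) - (N - lam) / PI) by (rewrite <- HL; field; lra).
  assert (A : Rabs ((1 - x ^ 2) * hx ^ 2 / 2) <= T ^ 2 * Pm / 2).
  { unfold Rdiv. rewrite !Rabs_mult. rewrite (Rabs_right (/ 2)) by lra. rewrite (Rabs_right (hx ^ 2)) by nra.
    assert (Rabs (1 - x ^ 2) <= T ^ 2) by (apply Rabs_le; nra).
    apply Rmult_le_compat_r. lra. apply Rmult_le_compat; auto; try apply Rabs_pos; nra. }
  assert (B : Rabs (lam * (lam * Mx / 2 - / PI)) <= 4 * T ^ 2 / lam).
  { rewrite Rabs_mult, (Rabs_right lam) by lra.
    replace (4 * T ^ 2 / lam) with (lam * (4 * T ^ 2 / L)) by (rewrite <- HL; field; lra).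
    apply Rmult_le_compat_l; lra. }
  assert (D : Rabs ((N - lam) / PI) <= 1 / (6 * lam)).
  { unfold Rdiv. rewrite Rabs_mult, Rabs_right by lra. rewrite Rabs_right by (left; apply Rinv_0_lt_compat; lra).
    assert (/ PI <= 1 / 3). { assert (/ PI <= / 3) by (apply Rinv_le_contravar; lra). lra. }
    replace (1 * / (6 * lam)) with (1 / (2 * lam) * (1 / 3)) by (field; lra).
    apply Rmult_le_compat; try lra. left; apply Rinv_0_lt_compat; lra. }
  unfold Rminus at 1. eapply Rle_trans. apply Rabs_triang. rewrite Rabs_Ropp.
  eapply Rle_trans. apply Rplus_le_compat_r. apply Rabs_triang.
  assert (T ^ 2 * Pm / 2 <= (3/2) * T ^ 2 / lam).
  { replace ((3/2) * T ^ 2 / lam) with (T ^ 2 * (3 / lam) / 2) by (field; lra).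
    unfold Rdiv. apply Rmult_le_compat_r. lra. apply Rmult_le_compat_l. nra. auto. }
  assert (1 / (6 * lam) <= (T ^ 2 / 24) / lam).
  { unfold Rdiv. rewrite Rinv_mult. rewrite <- Rmult_assoc. apply Rmult_le_compat_r. left; apply Rinv_0_lt_compat; lra. nra. }
  assert (17 * T ^ 2 / lam = ((3/2) * T ^ 2 + 4 * T ^ 2 + T ^ 2 / 24 + (17 - (3/2) - 4 - 1/24) * T ^ 2) / lam) by (field; lra).
  assert (0 <= (17 - (3/2) - 4 - 1/24) * T ^ 2 / lam). { apply Rmult_le_pos. nra. left; apply Rinv_0_lt_compat; lra. }
  unfold Rdiv in *. nra.
Qed.

Lemma cross_poly lam hx hy ux uy cx sx cy sy : lam <> 0 ->
  let st := sx * cy - cx * sy in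
  let ct := cx * cy + sx * sy in
  let v1x := cx * hx - sx * ux / lam in
  let v2x := sx * hx + cx * ux / lam in
  let v1y := cy * hy - sy * uy / lam in
  let v2y := sy * hy + cy * uy / lam in
  lam * ((cy ^ 2 + sy ^ 2) * (hy ^ 2 + uy ^ 2 / (lam * lam)) * st
         + ((v1x - v1y) * (st * v1y + ct * v2y) - (v2x - v2y) * (ct * v1y - st * v2y)))
  = (cx ^ 2 + sx ^ 2) * (cy ^ 2 + sy ^ 2) * (hx * uy - ux * hy).
Proof. intros Hl. simpl. field. auto. Qed.

Definition Ecr n lam x y :=
  (V1 n lam x - V1 n lam y) * (sin (lam * (x - y)) * V1 n lam y + cos (lam * (x - y)) * V2 n lam y)
  - (V2 n lam x - V2 n lam y) * (cos (lam * (x - y)) * V1 n lam y - sin (lam * (x - y)) * V2 n lam y).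

Lemma sc1 a : cos a ^ 2 + sin a ^ 2 = 1.
Proof. pose proof (sin2_cos2 a). unfold Rsqr in H. simpl. lra. Qed.

Lemma cross_id n lam x y : lam * lam = Lr n -> lam <> 0 ->
  hf n x * u1 n y - u1 n x * hf n y = lam * (Mf n y * sin (lam * (x - y)) + Ecr n lam x y).
Proof.
  intros HL Hl.
  pose proof (cross_poly lam (hf n x) (hf n y) (u1 n x) (u1 n y) (cos (lam * x)) (sin (lam * x)) (cos (lam * y)) (sin (lam * y)) Hl) as E.
  cbv zeta in E. rewrite !sc1 in E.
  unfold Ecr, Mf, V1, V2. replace (lam * (x - y)) with (lam * x - lam * y) by ring.
  rewrite sin_minus, cos_minus. rewrite <- HL.
  transitivity (1 * 1 * (hf n x * u1 n y - u1 n x * hf n y)). ring.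
  rewrite <- E. ring.
Qed.

Lemma abs_le_sqrt a P : 0 <= P -> a ^ 2 <= P -> Rabs a <= sqrt P.
Proof.
  intros HP Ha. rewrite <- sqrt_Rsqr_abs. apply sqrt_le_1_alt. unfold Rsqr. simpl in Ha. lra.
Qed.

Lemma Ecr_bound n lam T Pm x y : lam * lam = Lr n -> 0 < lam -> 0 <= Pm ->
  -T <= x <= T -> -T <= y <= T -> (forall z, -T <= z <= T -> hf n z ^ 2 <= Pm) -> Mf n y <= Pm ->
  Rabs (Ecr n lam x y) <= 2 * (T ^ 2 / lam) * Pm * Rabs (x - y).
Proof.
  intros HL Hl HPm Hx Hy Hh HM.
  assert (Hin : forall c, Rmin y x <= c <= Rmax y x -> -T <= c <= T).
  { intros c Hc. destruct (Rle_dec y x). rewrite Rmin_left, Rmax_right in Hc; lra. rewrite Rmin_right, Rmax_left in Hc; lra. }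
  assert (Hsq : forall c, -T <= c <= T -> c ^ 2 <= T ^ 2) by (intros; nra).
  assert (Hhb : forall c, -T <= c <= T -> Rabs (hf n c) <= sqrt Pm) by (intros; apply abs_le_sqrt; auto).
  set (Mb := T ^ 2 / lam * sqrt Pm).
  assert (D1 : Rabs (V1 n lam x - V1 n lam y) <= Mb * Rabs (x - y)).
  { apply (mvt_abs (V1 n lam) (fun z => - (z ^ 2 / lam) * sin (lam * z) * hf n z)).
    - intros; apply dV1; auto; lra.
    - intros c Hc. pose proof (Hin c Hc). rewrite !Rabs_mult. rewrite Rabs_Ropp.
      unfold Mb. rewrite (Rabs_right (c ^ 2 / lam)) by (apply Rle_ge, Rmult_le_pos; [nra| left; apply Rinv_0_lt_compat; lra]).
      assert (Rabs (sin (lam * c)) <= 1) by (apply Rabs_le, SIN_bound).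
      assert (c ^ 2 / lam <= T ^ 2 / lam) by (unfold Rdiv; apply Rmult_le_compat_r; [left; apply Rinv_0_lt_compat; lra| apply Hsq; auto]).
      pose proof (Hhb c H). pose proof (Rabs_pos (sin (lam * c))). pose proof (Rabs_pos (hf n c)).
      assert (0 <= c ^ 2 / lam) by (apply Rmult_le_pos; [nra| left; apply Rinv_0_lt_compat; lra]).
      replace (T ^ 2 / lam * sqrt Pm) with (T ^ 2 / lam * 1 * sqrt Pm) by ring.
      apply Rmult_le_compat; try nra; try (apply Rmult_le_compat; lra). }
  assert (D2 : Rabs (V2 n lam x - V2 n lam y) <= Mb * Rabs (x - y)).
  { apply (mvt_abs (V2 n lam) (fun z => (z ^ 2 / lam) * cos (lam * z) * hf n z)).
    - intros; apply dV2; auto; lra.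
    - intros c Hc. pose proof (Hin c Hc). rewrite !Rabs_mult.
      unfold Mb. rewrite (Rabs_right (c ^ 2 / lam)) by (apply Rle_ge, Rmult_le_pos; [nra| left; apply Rinv_0_lt_compat; lra]).
      assert (Rabs (cos (lam * c)) <= 1) by (apply Rabs_le, COS_bound).
      assert (c ^ 2 / lam <= T ^ 2 / lam) by (unfold Rdiv; apply Rmult_le_compat_r; [left; apply Rinv_0_lt_compat; lra| apply Hsq; auto]).
      pose proof (Hhb c H). pose proof (Rabs_pos (cos (lam * c))). pose proof (Rabs_pos (hf n c)).
      assert (0 <= c ^ 2 / lam) by (apply Rmult_le_pos; [nra| left; apply Rinv_0_lt_compat; lra]).
      replace (T ^ 2 / lam * sqrt Pm) with (T ^ 2 / lam * 1 * sqrt Pm) by ring.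
      apply Rmult_le_compat; try nra; try (apply Rmult_le_compat; lra). }
  set (st := sin (lam * (x - y))). set (ct := cos (lam * (x - y))).
  set (a1 := V1 n lam y). set (a2 := V2 n lam y).
  assert (Hsum : (st * a1 + ct * a2) ^ 2 + (ct * a1 - st * a2) ^ 2 = Mf n y).
  { transitivity ((ct ^ 2 + st ^ 2) * (a1 ^ 2 + a2 ^ 2)). ring.
    unfold ct, st. rewrite sc1. unfold a1, a2, V1, V2, Mf. rewrite <- HL.
    transitivity ((cos (lam * y) ^ 2 + sin (lam * y) ^ 2) * (hf n y ^ 2 + u1 n y ^ 2 / (lam * lam))). field. lra.
    rewrite sc1. ring. }
  assert (C1 : Rabs (st * a1 + ct * a2) <= sqrt Pm) by (apply abs_le_sqrt; auto; pose proof (pow2_ge_0 (ct * a1 - st * a2)); lra).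
  assert (C2 : Rabs (ct * a1 - st * a2) <= sqrt Pm) by (apply abs_le_sqrt; auto; pose proof (pow2_ge_0 (st * a1 + ct * a2)); lra).
  unfold Ecr. fold st ct a1 a2.
  eapply Rle_trans. apply Rabs_triang. rewrite Rabs_Ropp, !Rabs_mult.
  assert (SP : sqrt Pm * sqrt Pm = Pm) by (apply sqrt_sqrt; auto).
  pose proof (Rabs_pos (x - y)). pose proof (sqrt_pos Pm).
  assert (0 <= Mb) by (unfold Mb; apply Rmult_le_pos; [apply Rmult_le_pos; [nra| left; apply Rinv_0_lt_compat; lra]| auto]).
  assert (Rabs (V1 n lam x - a1) * Rabs (st * a1 + ct * a2) <= Mb * Rabs (x - y) * sqrt Pm)
    by (apply Rmult_le_compat; auto; apply Rabs_pos).
  assert (Rabs (V2 n lam x - a2) * Rabs (ct * a1 - st * a2) <= Mb * Rabs (x - y) * sqrt Pm)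
    by (apply Rmult_le_compat; auto; apply Rabs_pos).
  replace (2 * (T ^ 2 / lam) * Pm * Rabs (x - y)) with (Mb * Rabs (x - y) * sqrt Pm + Mb * Rabs (x - y) * sqrt Pm)
    by (unfold Mb; transitivity (2 * (T ^ 2 / lam) * (sqrt Pm * sqrt Pm) * Rabs (x - y)); [ring | rewrite SP; ring]).
  lra.
Qed.

Theorem mainTheorem5 (T : R) (n : nat) :
  2 <= T ->
  2 * T ^ 2 <= INR n ->
  let N := (sqrt (2 * INR n + 1) + sqrt (2 * INR n + 3)) / 2 in
  forall x y : R, -T <= x <= T -> -T <= y <= T ->
    Rabs (kernel_k n x y - sinc_term N x y) <= 17 * T ^ 2 / sqrt (2 * INR n + 1).
Proof.
  intros HT Hn N x y Hx Hy.
  set (lam := sqrt (2 * INR n + 1)) in *.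
  assert (HLdef : Lr n = 2 * INR n + 1) by reflexivity.
  set (L := Lr n) in *.
  assert (HL0 : 0 < L) by (rewrite HLdef; pose proof (pos_INR n); lra).
  assert (Hlam : lam * lam = L) by (unfold lam; rewrite <- HLdef; apply sqrt_sqrt; lra).
  assert (Hl : 0 < lam) by (unfold lam; apply sqrt_lt_R0; lra).
  assert (HL4 : 4 * T ^ 2 <= L - 1) by lra.
  assert (Hn2 : (2 <= n)%nat).
  { destruct n as [|[|n']]. simpl in Hn. nra. simpl in Hn. nra. lia. }
  assert (HTL : T ^ 2 < L) by nra.
  assert (HN : 0 <= N - lam <= 1 / (2 * lam)).
  { unfold N. set (s := sqrt (2 * INR n + 3)).
    assert (Hs2 : s * s = L + 2) by (unfold s; rewrite sqrt_sqrt; lra).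
    assert (Hs0 : 0 <= s) by apply sqrt_pos.
    assert (lam <= s) by nra.
    split. lra.
    assert ((s - lam) * (s + lam) = 2) by nra.
    apply (Rmult_le_reg_r (2 * lam)). lra.
    replace (1 / (2 * lam) * (2 * lam)) with 1 by (field; lra).
    nra. }
  set (k := 2 * T / (L - T ^ 2)).
  assert (Hk : 0 < k) by (unfold k; apply Rdiv_lt_0_compat; lra).
  assert (Gr : forall z, -T <= z <= T -> Pf n z <= Pf n 0 * exp (k * T) /\ Pf n 0 * exp (- (k * T)) <= Pf n z).
  { intros z Hz. apply (gronwall (Pf n) (fun c => 2 * c * u1 n c ^ 2 / (Lr n - c ^ 2) ^ 2)); auto.
    - intros c Hc. apply Pder. fold L. nra.
    - intros c Hc. fold L.
      assert (Hc2 : c ^ 2 <= T ^ 2) by nra.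
      assert (HLc : 0 < L - c ^ 2) by lra.
      assert (Q : u1 n c ^ 2 / (L - c ^ 2) <= Pf n c).
      { unfold Pf. fold L. pose proof (pow2_ge_0 (hf n c)). lra. }
      assert (Q0 : 0 <= u1 n c ^ 2 / (L - c ^ 2)) by (apply Rmult_le_pos; [apply pow2_ge_0| left; apply Rinv_0_lt_compat; lra]).
      replace (2 * c * u1 n c ^ 2 / (L - c ^ 2) ^ 2) with ((2 * c / (L - c ^ 2)) * (u1 n c ^ 2 / (L - c ^ 2))) by (field; lra).
      rewrite Rabs_mult. rewrite (Rabs_right (u1 n c ^ 2 / (L - c ^ 2))) by lra.
      apply Rmult_le_compat; auto. apply Rabs_pos.
      unfold k. unfold Rdiv. rewrite Rabs_mult. rewrite (Rabs_right (/ (L - c ^ 2))) by (left; apply Rinv_0_lt_compat; lra).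
      rewrite Rabs_mult, (Rabs_right 2) by lra.
      assert (Rabs c <= T) by (apply Rabs_le; lra).
      assert (/ (L - c ^ 2) <= / (L - T ^ 2)) by (apply Rinv_le_contravar; lra).
      pose proof (Rabs_pos c).
      assert (0 < / (L - T ^ 2)) by (apply Rinv_0_lt_compat; lra).
      assert (0 < / (L - c ^ 2)) by (apply Rinv_0_lt_compat; lra).
      apply Rmult_le_compat; nra. }
  set (P0 := Pf n 0).
  assert (HP0 : 0 <= P0) by (unfold P0, Pf; pose proof (pow2_ge_0 (hf n 0)); pose proof (pow2_ge_0 (u1 n 0)); fold L;
     replace (L - 0 ^ 2) with L by ring; apply Rplus_le_le_0_compat; auto; apply Rmult_le_pos; auto; left; apply Rinv_0_lt_compat; lra).
  pose proof (center n lam Hn2 Hlam Hl) as Hc. fold L P0 in Hc.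
  set (Pm := P0 * exp (k * T)).
  assert (Kz : forall z, -T <= z <= T -> Rabs (lam * Mf n z / 2 - / PI) <= 4 * T ^ 2 / L /\ Pm <= 3 / lam).
  { intros z Hz. destruct (Gr z Hz) as [G1 G2].
    assert (Hz2 : z ^ 2 <= T ^ 2) by nra.
    apply (key_bound T L lam P0 (Pf n z) (Mf n z)); auto.
    - unfold Pf, Mf. fold L. pose proof (pow2_ge_0 (hf n z)). pose proof (pow2_ge_0 (u1 n z)).
      assert (0 < L - z ^ 2) by lra.
      assert (E : (L - T ^ 2) / L * (hf n z ^ 2 + u1 n z ^ 2 / (L - z ^ 2)) = (L - T ^ 2) / L * hf n z ^ 2 + ((L - T ^ 2) / (L - z ^ 2)) * (u1 n z ^ 2 / L)) by (field; lra).
      rewrite E.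
      assert ((L - T ^ 2) / L * hf n z ^ 2 <= hf n z ^ 2).
      { assert ((L - T ^ 2) / L <= 1) by (apply (Rmult_le_reg_r L); [lra|]; unfold Rdiv; rewrite Rmult_assoc, Rinv_l by lra; nra). nra. }
      assert ((L - T ^ 2) / (L - z ^ 2) * (u1 n z ^ 2 / L) <= u1 n z ^ 2 / L).
      { assert ((L - T ^ 2) / (L - z ^ 2) <= 1) by (apply (Rmult_le_reg_r (L - z ^ 2)); [lra|]; unfold Rdiv; rewrite Rmult_assoc, Rinv_l by lra; nra).
        assert (0 <= u1 n z ^ 2 / L) by (apply Rmult_le_pos; auto; left; apply Rinv_0_lt_compat; lra).
        assert (0 <= (L - T ^ 2) / (L - z ^ 2)) by (apply Rmult_le_pos; [lra| left; apply Rinv_0_lt_compat; lra]).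
        nra. }
      lra.
    - unfold Pf, Mf. fold L. pose proof (pow2_ge_0 (u1 n z)).
      assert (0 < L - z ^ 2) by lra.
      assert (u1 n z ^ 2 / L <= u1 n z ^ 2 / (L - z ^ 2)).
      { unfold Rdiv. apply Rmult_le_compat_l; auto. apply Rinv_le_contravar; nra. }
      lra. }
  assert (Hh : forall z, -T <= z <= T -> hf n z ^ 2 <= Pm).
  { intros z Hz. destruct (Gr z Hz) as [G1 _]. fold P0 Pm in G1. unfold Pf in G1. fold L in G1.
    assert (0 <= u1 n z ^ 2 / (L - z ^ 2)) by (apply Rmult_le_pos; [apply pow2_ge_0| left; apply Rinv_0_lt_compat; nra]).
    lra. }
  assert (HMP : forall z, -T <= z <= T -> Mf n z <= Pm).
  { intros z Hz. destruct (Gr z Hz) as [G1 _]. fold P0 Pm in G1.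
    unfold Pf, Mf in G1 |- *. fold L in G1 |- *. pose proof (pow2_ge_0 (u1 n z)).
    assert (u1 n z ^ 2 / L <= u1 n z ^ 2 / (L - z ^ 2)).
    { unfold Rdiv. apply Rmult_le_compat_l; auto. apply Rinv_le_contravar; nra. }
    lra. }
  assert (HPm0 : 0 <= Pm) by (unfold Pm; pose proof (exp_pos (k * T)); nra).
  destruct (Kz x Hx) as [Kx Pmb].
  destruct (Kz y Hy) as [Ky _].
  unfold sinc_term. destruct (Req_EM_T x y) as [Exy|Nxy].
  - subst y. rewrite k_diag. fold L.
    apply (final_diag T L lam N Pm (hf n x) x (Mf n x)); auto. nra.
  - rewrite (k_off n x y Nxy). rewrite (cross_id n lam x y Hlam ltac:(lra)).
    apply (final_off T L lam N Pm (hf n x) (hf n y) (Mf n y) (Ecr n lam x y) (x - y)); auto.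
    lra.
    apply (Ecr_bound n lam T Pm x y); auto.
Qed.
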